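(* Let $0<c<1$ and let $(t_n)_{n\geq1}$ satisfy $1<t_n<2$ for all $n$. Put $a_n=c^{t_n^n}$ and $F_n(z,w)=(z^2+a_nw,\ a_nz)$. Let $\Omega=\{(z,w)\in\mathbb{C}^2:F_n\circ\cdots\circ F_1(z,w)\to0\}$, let $K\subseteq\Omega$ be compact, and set $\delta_n=\max\{|z_n|,|w_n|:(z,w)\in K\}$ where $(z_n,w_n)=F_n\circ\cdots\circ F_1(z,w)$. Suppose that for arbitrarily large $n$ there is an integer $k(n)\geq1$ with $t_{n+k(n)+1}\leq 2^{\frac{k(n)}{n+k(n)+1}}$. Then there exist arbitrarily large $n$ with $\delta_n\leq a_{n+1}$. *)

(* Defs.v *)
From Stdlib Require Import Reals List.
From Coquelicot Require Import Coquelicot.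
Open Scope R_scope.

Definition aseq (c : R) (t : nat -> R) (n : nat) : R := Rpower c (t n ^ n).

Definition Fmap (c : R) (t : nat -> R) (n : nat) (p : C * C) : C * C :=
  (Cplus (Cmult (fst p) (fst p)) (Cmult (RtoC (aseq c t n)) (snd p)),
   Cmult (RtoC (aseq c t n)) (fst p)).

Fixpoint orbit (c : R) (t : nat -> R) (n : nat) (p : C * C) : C * C :=
  match n with
  | O => p
  | S m => Fmap c t (S m) (orbit c t m p)
  end.

Definition Omega (c : R) (t : nat -> R) (p : C * C) : Prop :=
  is_lim_seq (fun n => Cmod (fst (orbit c t n p))) 0 /\
  is_lim_seq (fun n => Cmod (snd (orbit c t n p))) 0.

Definition compact_C2 (K : C * C -> Prop) : Prop :=
  forall (I : Type) (U : I -> C * C -> Prop),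
    (forall i, @open (prod_UniformSpace C_UniformSpace C_UniformSpace) (U i)) ->
    (forall x, K x -> exists i, U i x) ->
    exists l : list I, forall x, K x -> exists i, In i l /\ U i x.

(* delta_n <= r, where delta_n = max {|z_n|,|w_n| : (z,w) in K} *)
Definition delta_le (c : R) (t : nat -> R) (K : C * C -> Prop) (n : nat) (r : R) : Prop :=
  forall p, K p -> Cmod (fst (orbit c t n p)) <= r /\ Cmod (snd (orbit c t n p)) <= r.

(* Main.v *)
Require Import Defs.
From Stdlib Require Import Reals List Lra.
From Coquelicot Require Import Coquelicot.
Open Scope R_scope.
Notation UC := (prod_UniformSpace C_UniformSpace C_UniformSpace).

Lemma cont_AC (U : UniformSpace) (f : U -> C) x :
  @continuous U (AbsRing_UniformSpace C_AbsRing) f x -> @continuous U C_UniformSpace f x.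
Proof. intros H P HP. apply H. apply locally_C. exact HP. Qed.
Lemma cont_CA (U : UniformSpace) (f : U -> C) x :
  @continuous U C_UniformSpace f x -> @continuous U (AbsRing_UniformSpace C_AbsRing) f x.
Proof. intros H P HP. apply H. apply locally_C. exact HP. Qed.

Lemma Fmap_cont c t m (q : UC) : continuous (Fmap c t m : UC -> UC) q.
Proof.
  set (a := RtoC (aseq c t m)).
  assert (hf : @continuous UC (AbsRing_UniformSpace C_AbsRing) (fun q : UC => fst q) q)
    by (apply cont_CA; destruct q; apply continuous_fst).
  assert (hs : @continuous UC (AbsRing_UniformSpace C_AbsRing) (fun q : UC => snd q) q)
    by (apply cont_CA; destruct q; apply continuous_snd).
  assert (ha : @continuous UC (AbsRing_UniformSpace C_AbsRing) (fun q : UC => a) q) by apply continuous_const.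
  assert (h1 : @continuous UC C_UniformSpace (fun q : UC => Cplus (Cmult (fst q) (fst q)) (Cmult a (snd q))) q).
  { apply cont_AC. apply (continuous_plus (K:=C_AbsRing) (V:=AbsRing_NormedModule C_AbsRing)
      (fun q : UC => @mult C_AbsRing (fst q) (fst q)) (fun q : UC => @mult C_AbsRing a (snd q))).
    apply continuous_mult; assumption. apply continuous_mult; assumption. }
  assert (h2 : @continuous UC C_UniformSpace (fun q : UC => Cmult a (fst q)) q).
  { apply cont_AC. apply (continuous_mult (K:=C_AbsRing) (fun _ => a) (fun q : UC => fst q)); assumption. }
  eapply continuous_ext.
  2: apply (continuous_comp_2 (U:=UC) (V:=C_UniformSpace) (W:=C_UniformSpace) (X:=UC) _ _ pair q h1 h2).
  intros; reflexivity.
  eapply continuous_ext. 2: apply continuous_id. intros [x y]; reflexivity.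
Qed.

Lemma orbit_cont c t n (p : UC) : continuous (orbit c t n : UC -> UC) p.
Proof.
  induction n; simpl.
  - apply continuous_id.
  - apply (continuous_comp (U:=UC) (V:=UC) (W:=UC) (orbit c t n) (Fmap c t (S n))). exact IHn. apply Fmap_cont.
Qed.

Lemma g1_cont c t n (p : UC) : continuous (fun p : UC => Cmod (fst (orbit c t n p))) p.
Proof.
  apply (continuous_comp (U:=UC) (V:=C_UniformSpace) (W:=R_UniformSpace) (fun p : UC => fst (orbit c t n p)) Cmod).
  apply (continuous_comp (U:=UC) (V:=UC) (W:=C_UniformSpace) (orbit c t n) fst). apply orbit_cont.
  destruct (orbit c t n p); apply continuous_fst.
  apply (filterlim_norm (K:=C_AbsRing) (V:=C_NormedModule)).
Qed.
Lemma g2_cont c t n (p : UC) : continuous (fun p : UC => Cmod (snd (orbit c t n p))) p.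
Proof.
  apply (continuous_comp (U:=UC) (V:=C_UniformSpace) (W:=R_UniformSpace) (fun p : UC => snd (orbit c t n p)) Cmod).
  apply (continuous_comp (U:=UC) (V:=UC) (W:=C_UniformSpace) (orbit c t n) snd). apply orbit_cont.
  destruct (orbit c t n p); apply continuous_snd.
  apply (filterlim_norm (K:=C_AbsRing) (V:=C_NormedModule)).
Qed.

Lemma U_open c t n r : @open UC (fun p => Cmod (fst (orbit c t n p)) < r /\ Cmod (snd (orbit c t n p)) < r).
Proof.
  intros p [H1 H2]. apply filter_and.
  - apply (g1_cont c t n p (fun y => y < r)). apply open_lt; exact H1.
  - apply (g2_cont c t n p (fun y => y < r)). apply open_lt; exact H2.
Qed.

From Stdlib Require Import Classical Lia.

Lemma exp_le_mono x y : x <= y -> exp x <= exp y.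
Proof. intros H. destruct (Req_dec x y) as [->|Hn]. lra. left; apply exp_increasing; lra. Qed.

Lemma Rpower_dec c x y : 0 < c < 1 -> x <= y -> Rpower c y <= Rpower c x.
Proof.
  intros Hc Hxy. unfold Rpower. apply exp_le_mono.
  assert (ln c < 0). { rewrite <- ln_1. apply ln_increasing; lra. }
  nra.
Qed.

Lemma aseq_pos c t m : 0 < aseq c t m.
Proof. unfold aseq, Rpower. apply exp_pos. Qed.

Lemma aseq_le c t m : 0 < c < 1 -> 1 <= t m ^ m -> aseq c t m <= c.
Proof.
  intros Hc H. unfold aseq. rewrite <- (Rpower_1 c) at 2 by lra. apply Rpower_dec; auto.
Qed.

Lemma step_bound (a s : R) (q : C * C) : 0 <= a -> Cmod (fst q) <= s -> Cmod (snd q) <= s ->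
  Cmod (Cplus (Cmult (fst q) (fst q)) (Cmult (RtoC a) (snd q))) <= s*s + a*s /\
  Cmod (Cmult (RtoC a) (fst q)) <= a*s.
Proof.
  intros Ha H1 H2. destruct q as [z w]; simpl in *.
  assert (Hz := Cmod_ge_0 z). assert (Hw := Cmod_ge_0 w).
  split.
  - eapply Rle_trans. apply Cmod_triangle. rewrite !Cmod_mult, Cmod_R, Rabs_pos_eq by lra. nra.
  - rewrite Cmod_mult, Cmod_R, Rabs_pos_eq by lra. nra.
Qed.

Lemma persist c t r p : 0 < c < 1 -> (forall n, (1 <= n)%nat -> 1 < t n < 2) -> 0 <= r -> r <= 1 - c ->
  forall j m, Cmod (fst (orbit c t m p)) <= r /\ Cmod (snd (orbit c t m p)) <= r ->
  Cmod (fst (orbit c t (m + j) p)) <= r /\ Cmod (snd (orbit c t (m + j) p)) <= r.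
Proof.
  intros Hc Ht Hr0 Hr1 j. induction j; intros m Hm.
  - rewrite Nat.add_0_r; exact Hm.
  - rewrite Nat.add_succ_r. specialize (IHj m Hm). simpl. unfold Fmap.
    assert (Ha := aseq_pos c t (S (m + j))).
    assert (Hac : aseq c t (S (m+j)) <= c).
    { apply aseq_le; auto. apply pow_R1_Rle. destruct (Ht (S (m+j))); lia || lra. }
    destruct IHj as [H1 H2].
    destruct (step_bound (aseq c t (S (m+j))) r (orbit c t (m+j) p)) as [B1 B2]; try lra; auto.
    split; [eapply Rle_trans; [exact B1|] | eapply Rle_trans; [exact B2|]]; nra.
Qed.

Lemma mono c t K n s s' : delta_le c t K n s -> s <= s' -> delta_le c t K n s'.
Proof. intros H Hs p Hp. destruct (H p Hp). split; lra. Qed.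

Lemma doubling c t K N : 0 < c < 1 ->
  (forall n, (N <= n)%nat -> ~ delta_le c t K n (aseq c t (n + 1))) ->
  forall j m s, (N <= m)%nat -> 0 <= s -> delta_le c t K m s ->
  delta_le c t K (m + j) ((2*s)^(2^j)/2).
Proof.
  intros Hc Hneg j. induction j; intros m s Hm Hs Hd.
  - rewrite Nat.add_0_r. simpl. eapply mono. exact Hd. lra.
  - specialize (IHj m s Hm Hs Hd). set (x := (2*s)^(2^j)/2) in *.
    assert (Hx : 0 <= x). { unfold x. assert (0 <= (2*s)^(2^j)) by (apply pow_le; lra). lra. }
    assert (Hlt : aseq c t (m + j + 1) < x).
    { destruct (Rlt_or_le (aseq c t (m+j+1)) x) as [h|h]; auto.
      exfalso. apply (Hneg (m+j)%nat). lia. eapply mono; eauto. }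
    rewrite Nat.add_1_r in Hlt.
    assert (Ha := aseq_pos c t (S (m + j))).
    assert (E : (2*s)^(2^(S j))/2 = 2 * (x*x)).
    { unfold x. replace (2^(S j))%nat with (2^j + 2^j)%nat by (simpl; lia). rewrite pow_add. field. }
    rewrite E. intros p Hp. destruct (IHj p Hp) as [H1 H2].
    rewrite Nat.add_succ_r. simpl. unfold Fmap.
    destruct (step_bound (aseq c t (S (m+j))) x (orbit c t (m+j) p)) as [B1 B2]; try lra; auto.
    split; [eapply Rle_trans; [exact B1|] | eapply Rle_trans; [exact B2|]]; nra.
Qed.

Lemma fold_max_ge (l : list nat) N : (N <= fold_right Nat.max N l)%nat /\
  forall i, In i l -> (i <= fold_right Nat.max N l)%nat.
Proof.
  induction l as [|a l IH]; simpl. split; [lia| tauto].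
  destruct IH as [IH1 IH2]. split. lia. intros i [<-|Hi]. lia. specialize (IH2 i Hi). lia.
Qed.

Lemma pow_le_one' x k : 0 <= x <= 1 -> x ^ k <= 1.
Proof. intros Hx. induction k; simpl. lra. assert (0 <= x^k) by (apply pow_le; lra). nra. Qed.

Lemma pow_le_self x k : 0 <= x <= 1 -> (1 <= k)%nat -> x ^ k <= x.
Proof.
  intros Hx Hk. destruct k. lia. simpl. assert (x ^ k <= 1) by (apply pow_le_one'; lra). nra.
Qed.

Theorem lemma4p2 (c : R) (t : nat -> R) (K : C * C -> Prop) :
  0 < c < 1 ->
  (forall n, (1 <= n)%nat -> 1 < t n < 2) ->
  compact_C2 K ->
  (forall p, K p -> Omega c t p) ->
  (forall N : nat, exists n : nat, (N <= n)%nat /\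
     exists k : nat, (1 <= k)%nat /\
       t (n + k + 1)%nat <= Rpower 2 (INR k / INR (n + k + 1))) ->
  forall N : nat, exists n : nat, (N <= n)%nat /\
    delta_le c t K n (aseq c t (n + 1)).
Proof.
  intros Hc Ht HK HO Hk N.
  apply NNPP; intro Hneg.
  assert (Hneg' : forall n, (N <= n)%nat -> ~ delta_le c t K n (aseq c t (n + 1))).
  { intros n Hn Hd; apply Hneg; exists n; auto. }
  set (r := c * (1 - c) / 2).
  assert (Hr : 0 < r) by (unfold r; nra).
  assert (Hr1 : r <= 1 - c) by (unfold r; nra).
  assert (Hr2 : 2 * r <= c) by (unfold r; nra).
  destruct (HK nat (fun i p => Cmod (fst (orbit c t i p)) < r /\ Cmod (snd (orbit c t i p)) < r))
    as [l Hl].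
  { intros i. apply U_open. }
  { intros p Hp. destruct (HO p Hp) as [L1 L2].
    apply is_lim_seq_spec in L1. apply is_lim_seq_spec in L2.
    destruct (L1 (mkposreal r Hr)) as [M1 HM1]. destruct (L2 (mkposreal r Hr)) as [M2 HM2].
    exists (Nat.max M1 M2). simpl in *.
    specialize (HM1 (Nat.max M1 M2) ltac:(lia)). specialize (HM2 (Nat.max M1 M2) ltac:(lia)).
    rewrite Rminus_0_r, Rabs_pos_eq in HM1, HM2 by apply Cmod_ge_0. auto. }
  set (n0 := fold_right Nat.max N l).
  destruct (fold_max_ge l N) as [Hn0 Hin].
  assert (D0 : delta_le c t K n0 r).
  { intros p Hp. destruct (Hl p Hp) as [i [Hi [U1 U2]]].
    specialize (Hin i Hi). fold n0 in Hin.
    replace n0 with (i + (n0 - i))%nat by lia.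
    apply persist; auto; lra. }
  destruct (Hk n0) as [n [Hn [k [Hk1 Htk]]]].
  assert (Dn : delta_le c t K n r).
  { replace n with (n0 + (n - n0))%nat by lia.
    eapply mono. apply (doubling c t K N Hc Hneg' (n-n0) n0 r Hn0 ltac:(lra) D0).
    assert ((2*r)^(2^(n-n0)) <= 2 * r).
    { apply pow_le_self. lra. apply Nat.pow_lower_bound. lia. }
    lra. }
  assert (Dnk := doubling c t K N Hc Hneg' k n r ltac:(lia) ltac:(lra) Dn).
  apply (Hneg' (n + k)%nat). lia.
  eapply mono. exact Dnk.
  set (m := (n + k + 1)%nat) in *.
  assert (Htm : 1 < t m < 2) by (apply Ht; unfold m; lia).
  assert (P1 : (2*r)^(2^k) <= c^(2^k)) by (apply pow_incr; lra).
  assert (P0 : 0 < c^(2^k)) by (apply pow_lt; lra).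
  assert (P2 : c^(2^k) <= aseq c t m).
  { unfold aseq. rewrite <- Rpower_pow by lra. apply Rpower_dec; auto.
    rewrite pow_INR. replace (INR 2) with 2 by (simpl; lra).
    replace (2 ^ k) with (Rpower 2 (INR k / INR m) ^ m).
    - apply pow_incr; lra.
    - rewrite <- Rpower_pow by (unfold Rpower; apply exp_pos).
      rewrite Rpower_mult. replace (INR k / INR m * INR m) with (INR k).
      + apply Rpower_pow; lra.
      + field. apply not_0_INR. unfold m; lia. }
  replace (n + k + 1)%nat with m by reflexivity. lra.
Qed.
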